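(* For every natural number $k$ there is a finite set $\mathcal{F}_k$ of graphs such that a graph is $k$-modular if and only if it contains no member of $\mathcal{F}_k$ as an induced subgraph.
   Context: A module of a graph $G=(V,E)$ is a set $M\subseteq V$ such that every vertex outside $M$ is adjacent either to all vertices of $M$ or to none of them. A module is strong if it does not overlap (intersect without containment either way) any other module. The strong modules ordered by inclusion form the modular decomposition tree of $G$: its leaves are the single vertices, and each internal node $N$ (a strong module with at least two vertices) has as children its maximal proper strong submodules $M_1,\ldots,M_m$; the quotient graph $H_N$ has vertex set $\{M_1,\ldots,M_m\}$ with $M_i\sim M_j$ iff all edges between $M_i$ and $M_j$ are present. $N$ is a union node if $H_N$ is edgeless, a join node if $H_N$ is complete, and a prime node otherwise. A graph is $k$-modular if for every prime node $N$ of its modular decomposition tree the quotient graph $H_N$ has at most $k$ vertices. (The $0$-modular graphs are exactly the cographs.) *)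

(* Defs.v *)
From mathcomp Require Import all_boot.
Set Implicit Arguments. Unset Strict Implicit. Unset Printing Implicit Defensive.

Definition simple_graph (T : finType) (e : rel T) : Prop :=
  symmetric e /\ irreflexive e.

Section Modular.
Variables (T : finType) (e : rel T).

Definition module (M : {set T}) : bool :=
  [forall x, (x \notin M) ==>
     ([forall y in M, e x y] || [forall y in M, ~~ e x y])].

Definition overlap (A B : {set T}) : bool :=
  [&& A :&: B != set0, ~~ (A \subset B) & ~~ (B \subset A)].

Definition strong (M : {set T}) : bool :=
  module M && [forall M' : {set T}, module M' ==> ~~ overlap M M'].

(* children of N in the modular decomposition tree: the maximal proper
   strong submodules of N *)
Definition mchild (N M : {set T}) : bool :=
  [&& strong M, M \proper N &
      [forall M' : {set T}, (strong M' && (M' \proper N) && (M \subset M'))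
                              ==> (M' == M)]].

Definition children (N : {set T}) : {set {set T}} := [set M | mchild N M].

Definition qadj (M1 M2 : {set T}) : bool :=
  [forall x in M1, forall y in M2, e x y].

Definition quotient_edgeless (N : {set T}) : bool :=
  [forall M1 in children N, forall M2 in children N,
     (M1 != M2) ==> ~~ qadj M1 M2].

Definition quotient_complete (N : {set T}) : bool :=
  [forall M1 in children N, forall M2 in children N,
     (M1 != M2) ==> qadj M1 M2].

(* prime node: an internal node (strong module with >= 2 vertices) that is
   neither a union node nor a join node *)
Definition prime_node (N : {set T}) : bool :=
  [&& strong N, 1 < #|N|, ~~ quotient_edgeless N & ~~ quotient_complete N].

Definition k_modular (k : nat) : Prop :=
  forall N : {set T}, prime_node N -> #|children N| <= k.

End Modular.

Record sgraph := FGraph { fg_n : nat; fg_e : rel 'I_fg_n }.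

Definition sgraph_simple (H : sgraph) : Prop := simple_graph (@fg_e H).

Definition contains_induced (H : sgraph) (T : finType) (e : rel T) : Prop :=
  exists f : 'I_(fg_n H) -> T,
    injective f /\ forall x y, @fg_e H x y = e (f x) (f y).

(* Main.v *)
Require Import Defs.
From mathcomp Require Import all_boot.
From mathcomp Require Import zify.
Set Implicit Arguments. Unset Strict Implicit. Unset Printing Implicit Defensive.
Section Mods.
Variables (T : finType) (e : rel T).
Hypothesis esy : symmetric e.
Implicit Types W P S M Y V A B Z C X N : {set T}.

Definition wmod (W M : {set T}) : bool :=
  (M \subset W) && [forall x in W :\: M, forall y in M, forall z in M, e x y == e x z].

Definition primeb (W : {set T}) : bool :=
  (2 < #|W|) && [forall M : {set T}, wmod W M ==>
     [forall a in M, forall b in M, (a != b) ==> (W \subset M)]].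

Lemma wmodP (W M : {set T}) : reflect (M \subset W /\ forall x y z, x \in W -> x \notin M ->
   y \in M -> z \in M -> e x y = e x z) (wmod W M).
Proof.
apply: (iffP andP) => [[H1 /forallP H2]|[H1 H2]]; split => //.
  move=> x y z xW xM yM zM; have := H2 x; rewrite inE xM xW /=.
  by move=> /forallP/(_ y); rewrite yM => /forallP/(_ z); rewrite zM => /eqP.
apply/forallP => x; apply/implyP; rewrite inE => /andP[xM xW].
apply/forallP => y; apply/implyP => yM; apply/forallP => z; apply/implyP => zM.
by apply/eqP; apply: H2.
Qed.

Lemma primeP (W : {set T}) : reflect (2 < #|W| /\ forall M, wmod W M -> forall a b, a \in M -> b \in M ->
   a != b -> W \subset M) (primeb W).
Proof.
apply: (iffP andP) => [[H1 /forallP H2]|[H1 H2]]; split => //.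
  move=> M HM a b aM bM ab; have := H2 M; rewrite HM /=.
  by move=> /forallP/(_ a); rewrite aM => /forallP/(_ b); rewrite bM ab.
apply/forallP => M; apply/implyP => HM.
apply/forallP => a; apply/implyP => aM; apply/forallP => b; apply/implyP => bM.
by apply/implyP; apply: H2.
Qed.

Lemma wmod_restr (W V M : {set T}) : wmod W M -> V \subset W -> wmod V (M :&: V).
Proof.
move=> /wmodP[MW HM] VW; apply/wmodP; split; first exact: subsetIr.
move=> x y z xV; rewrite !inE xV andbT => xM /andP[yM _] /andP[zM _].
by apply: HM => //; apply: (subsetP VW).
Qed.

Lemma wmodU (W A B : {set T}) : wmod W A -> wmod W B -> A :&: B != set0 -> wmod W (A :|: B).
Proof.
move=> /wmodP[AW HA] /wmodP[BW HB] /set0Pn[c]; rewrite inE => /andP[cA cB].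
apply/wmodP; split; first by rewrite subUset AW BW.
move=> x y z xW; rewrite !inE negb_or => /andP[xA xB].
have Hy : forall y, y \in A :|: B -> e x y = e x c.
  move=> w; rewrite inE => /orP[wA|wB]; [exact: HA | exact: HB].
by move=> yU zU; rewrite (Hy y) ?inE ?yU // (Hy z) ?inE ?zU.
Qed.

Lemma wmodD (W A B : {set T}) : wmod W A -> wmod W B -> A :\: B != set0 -> wmod W (B :\: A).
Proof.
move=> /wmodP[AW HA] /wmodP[BW HB] /set0Pn[w]; rewrite inE => /andP[wB wA].
apply/wmodP; split; first by apply: subset_trans BW; apply: subsetDl.
move=> x y z xW; rewrite !inE negb_and negbK => xBA /andP[yA yB] /andP[zA zB].
case: (boolP (x \in B)) => xB; last exact: HB.
have xA : x \in A by move: xBA; rewrite xB orbF.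
have E : forall u, u \in B -> u \notin A -> e x u = e w y.
  move=> u uB uA; rewrite esy (HA u x w) ?(subsetP BW) //.
  by rewrite esy (HB w u y) ?(subsetP AW).
by rewrite (E y) // (E z).
Qed.


Definition sepb (W : {set T}) (t : bool) (P : {set T}) : bool :=
  [&& P \subset W, P != set0, ~~ (W \subset P) &
      [forall p in P, forall q in W :\: P, e p q == t]].

Lemma sepP W t P : reflect ([/\ P \subset W, P != set0, ~~ (W \subset P) &
   forall p q, p \in P -> q \in W -> q \notin P -> e p q = t]) (sepb W t P).
Proof.
apply: (iffP and4P) => [[H1 H2 H3 /forallP H4]|[H1 H2 H3 H4]]; split => //.
  move=> p q pP qW qP; have := H4 p; rewrite pP /= => /forallP/(_ q).
  by rewrite inE qW qP => /eqP.
apply/forallP => p; apply/implyP => pP; apply/forallP => q; apply/implyP.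
by rewrite inE => /andP[qP qW]; apply/eqP; apply: H4.
Qed.

Lemma sep_compl W t P : sepb W t P -> sepb W t (W :\: P).
Proof.
case/sepP => PW P0 WP H; apply/sepP; split.
- exact: subsetDl.
- by apply/set0Pn; case/subsetPn: WP => x xW xP; exists x; rewrite inE xP.
- by case/set0Pn: P0 => x xP; apply/subsetPn; exists x; rewrite ?inE ?xP // (subsetP PW).
- move=> p q; rewrite !inE => /andP[pP pW] qW; rewrite qW andbT negbK => qP.
  by rewrite esy; apply: H.
Qed.

Lemma sep_wmod W t P : sepb W t P -> wmod W P.
Proof.
case/sepP => PW _ _ H; apply/wmodP; split => // x y z xW xP yP zP.
by rewrite esy (H y x) // esy (H z x).
Qed.

Definition ovhyp (W : {set T}) := forall Y a b, wmod W Y -> a \in Y -> b \in Y -> a != b ->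
   ~~ (W \subset Y) -> exists Y', wmod W Y' /\ overlap Y Y'.

Lemma sep_all W t P0 : ovhyp W -> sepb W t P0 ->
  forall x y, x \in W -> y \in W -> x != y -> e x y = t.
Proof.
move=> OV sP0 x y xW yW xy.
have [P1 sP1 xP1] : exists2 P, sepb W t P & x \in P.
  case: (boolP (x \in P0)) => xP0; first by exists P0.
  by exists (W :\: P0); [apply: sep_compl | rewrite inE xP0].
case: (arg_minnP (fun P => #|P|) (i0 := P1) (P := fun P => sepb W t P && (x \in P))).
  by rewrite sP1.
move=> P /andP[sP xP] Pmin.
have [PW Pn0 WP H] := sepP _ _ _ sP.
case: (boolP (y \in P)) => yP.
  have [Y' [mY' ov]] := OV P x y (sep_wmod sP) xP yP xy WP.
  case/and3P: ov => /set0Pn[u uI] nPY nYP.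
  case/subsetPn: nPY => v vP vY.
  case/subsetPn: nYP => w wY wP.
  have [Y'W HY] := wmodP _ _ mY'.
  have uP : u \in P by move: uI; rewrite inE => /andP[].
  have uY : u \in Y' by move: uI; rewrite inE => /andP[].
  have wW : w \in W by apply: (subsetP Y'W).
  have vW : v \in W by apply: (subsetP PW).
  have Hv : forall v' y', v' \in P -> v' \notin Y' -> y' \in Y' -> e v' y' = t.
    move=> v' y' v'P v'Y y'Y; rewrite (HY v' y' w) ?(subsetP PW) //.
    exact: H.
  have s1 : sepb W t (P :&: Y').
    apply/sepP; split.
    - by apply: subset_trans PW; apply: subsetIl.
    - by apply/set0Pn; exists u.
    - apply/subsetPn; exists v => //; by rewrite inE (negbTE vY) andbF.
    - move=> p q; rewrite !inE => /andP[pP pY] qW; rewrite negb_and.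
      case: (boolP (q \in P)) => qP /=; last by move=> _; apply: H.
      by move=> qY; rewrite esy; apply: Hv.
  have s2 : sepb W t (P :\: Y').
    apply/sepP; split.
    - by apply: subset_trans PW; apply: subsetDl.
    - by apply/set0Pn; exists v; rewrite inE vY.
    - apply/subsetPn; exists u => //; first by apply: (subsetP PW).
      by rewrite inE uY.
    - move=> p q; rewrite !inE => /andP[pY pP] qW; rewrite negb_and negbK.
      case: (boolP (q \in P)) => qP /=; last by move=> _; apply: H.
      by rewrite orbF => qY; apply: Hv.
  have c1 : #|P :&: Y'| < #|P|.
    apply: proper_card; apply/properP; split; first exact: subsetIl.
    by exists v => //; rewrite inE (negbTE vY) andbF.
  have c2 : #|P :\: Y'| < #|P|.
    apply: proper_card; apply/properP; split; first exact: subsetDl.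
    by exists u => //; rewrite inE uY.
  case: (boolP (x \in Y')) => xY.
    have := Pmin (P :&: Y'); rewrite s1 inE xP xY => /(_ isT).
    by rewrite leqNgt c1.
  have := Pmin (P :\: Y'); rewrite s2 inE xP xY => /(_ isT).
  by rewrite leqNgt c2.
exact: H.
Qed.

Lemma ov_uniform W S a b : ovhyp W -> wmod W S -> a \in S -> b \in S -> a != b ->
  ~~ (W \subset S) -> exists t, forall x y, x \in W -> y \in W -> x != y -> e x y = t.
Proof.
move=> OV mS aS bS ab WS.
case: (arg_maxnP (fun M => #|M|) (i0 := S)
   (P := fun M => [&& wmod W M, S \subset M & ~~ (W \subset M)])).
  by rewrite mS subxx WS.
move=> M /and3P[mM SM WM] Mmax.
have aM := subsetP SM a aS; have bM := subsetP SM b bS.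
have [M' [mM' ov]] := OV M a b mM aM bM ab WM.
case/and3P: ov => I0 nMM' nM'M.
have mU := wmodU mM mM' I0.
have [MW _] := wmodP _ _ mM; have [M'W _] := wmodP _ _ mM'.
have UW : W \subset M :|: M'.
  apply/negPn/negP => WU.
  have := Mmax (M :|: M'); rewrite mU WU (subset_trans SM (subsetUl _ _)) /=.
  move=> /(_ isT); rewrite leqNgt; apply/negP/negPn.
  apply: proper_card; apply/properP; split; first exact: subsetUl.
  by case/subsetPn: nM'M => w wM' wM; exists w; rewrite // inE wM' orbT.
have mD : wmod W (M' :\: M).
  apply: wmodD mM mM' _; case/subsetPn: nMM' => w wM wM'.
  by apply/set0Pn; exists w; rewrite inE wM wM'.
case/subsetPn: WM => q0 q0W q0M.
have q0M' : q0 \in M'.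
  by move: (subsetP UW q0 q0W); rewrite inE (negbTE q0M).
exists (e a q0); apply: (sep_all (P0 := M) OV).
apply/sepP; split => //.
- by apply/set0Pn; exists a.
- by apply/subsetPn; exists q0.
- move=> p q pM qW qM.
  have qM' : q \in M' by move: (subsetP UW q qW); rewrite inE (negbTE qM).
  have [_ HD] := wmodP _ _ mD; have [_ HM] := wmodP _ _ mM.
  rewrite esy (HM q p a) //.
  by rewrite esy (HD a q q0) ?(subsetP MW) ?inE ?aM ?qM ?qM' ?q0M ?q0M'.
Qed.


Definition P4in W := exists a b c d s, [/\ a \in W, b \in W, c \in W & d \in W] /\
  (e a b = s /\ e b c = s /\ e c d = s) /\ (e a c = ~~ s /\ e b d = ~~ s /\ e a d = ~~ s).

Lemma neqt (b t : bool) : b != t -> b = ~~ t.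
Proof. by case: b; case: t. Qed.

Section Step.
Variables (W : {set T}) (v : T).
Hypothesis vW : v \in W.
Let W' := W :\ v.

Lemma sepA t P : sepb W' t P -> (forall p, p \in P -> e v p = t) -> sepb W t P.
Proof.
case/sepP => PW' Pn0 _ H Hv; have PW : P \subset W.
  by apply: subset_trans PW' _; apply: subsetDl.
apply/sepP; split => //.
  apply/subsetPn; exists v => //; apply/negP => vP.
  by move: (subsetP PW' v vP); rewrite !inE eqxx.
move=> p q pP qW qP; case: (eqVneq q v) => [->|qv]; first by rewrite esy Hv.
by apply: H; rewrite // !inE qv qW.
Qed.

Lemma inner t P p1 q1 u : sepb W' t P -> p1 \in P -> e v p1 = ~~ t -> q1 \in W' -> q1 \notin P ->
  e v q1 = ~~ t -> u \in P -> e v u = t -> (exists t P, sepb W t P) \/ P4in W.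
Proof.
move=> sP p1P vp1 q1W q1P vq1 uP vu.
have [PW' Pn0 _ H] := sepP _ _ _ sP.
have W'W : W' \subset W by apply: subsetDl.
have vW' : v \notin W' by rewrite !inE eqxx.
set P2 := [set p in P | e v p == t].
case: (boolP [forall w in P, forall u' in P2, (e v w != t) ==> (e w u' == t)]) => HF.
  left; exists t, P2; apply/sepP; split.
  - by apply: subset_trans W'W; apply: subset_trans PW'; apply/subsetP => x; rewrite inE => /andP[].
  - by apply/set0Pn; exists u; rewrite inE uP vu eqxx.
  - apply/subsetPn; exists p1; first exact: (subsetP W'W _ (subsetP PW' _ p1P)).
    by rewrite inE p1P vp1 /=; case: t {vp1 vq1 vu HF H sP P2}.
  - move=> p q; rewrite inE => /andP[pP /eqP vp] qW; rewrite inE negb_and.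
    case: (eqVneq q v) => [->|qv]; first by rewrite esy.
    case: (boolP (q \in P)) => qP /=.
      move=> vq; have := forallP HF q; rewrite qP /= => /forallP/(_ p).
      rewrite inE pP vp eqxx /= vq => /eqP; by rewrite esy.
    by move=> _; apply: H; rewrite // !inE qv qW.
right.
move: HF; rewrite negb_forall => /existsP[w]; rewrite negb_imply => /andP[wP].
rewrite negb_forall => /existsP[u']; rewrite negb_imply => /andP[u'P2].
rewrite negb_imply => /andP[vw wu'].
move: u'P2; rewrite inE => /andP[u'P /eqP vu'].
have wW' := subsetP PW' w wP; have u'W' := subsetP PW' u' u'P.
exists u', w, v, q1, (~~ t); split; first (split => //; try exact: (subsetP W'W)).
split; (split; [|split]).
- by rewrite esy; apply: neqt.
- by rewrite esy; apply: neqt.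
- by [].
- by rewrite negbK esy.
- by rewrite negbK; apply: H.
- by rewrite negbK; apply: H.
Qed.

End Step.

Lemma sep_or_P4 n : forall W, #|W| = n.+2 -> (exists t P, sepb W t P) \/ P4in W.
Proof.
elim: n => [|n IH] W cW.
  have : 1 < #|W| by rewrite cW.
  case/card_gt1P => x [y [xW yW xy]].
  have WE : W = [set x; y].
    apply/eqP; rewrite eq_sym eqEcard cards2 xy cW leqnn andbT.
    by apply/subsetP => z; rewrite !inE => /orP[] /eqP->.
  left; exists (e x y), [set x]; apply/sepP; split.
  - by rewrite sub1set.
  - by apply/set0Pn; exists x; rewrite inE.
  - by apply/subsetPn; exists y; rewrite // inE eq_sym.
  - move=> p q; rewrite inE => /eqP-> {p}; rewrite WE !inE => /orP[] /eqP->.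
      by rewrite eqxx.
    by [].
have : 0 < #|W| by rewrite cW.
case/card_gt0P => v vW.
have cW' : #|W :\ v| = n.+2.
  by move: cW; rewrite (cardsD1 v W) vW add1n => -[].
have W'W : W :\ v \subset W by apply: subsetDl.
have vW' : v \notin W :\ v by rewrite !inE eqxx.
case: (IH _ cW') => [[t [P sP]]|[a [b [c [d [s [[aW bW cW1 dW] E]]]]]]]; last first.
  by right; exists a, b, c, d, s; split => //; split; apply: (subsetP W'W).
have [PW' Pn0 _ H] := sepP _ _ _ sP.
case: (boolP [forall p in P, e v p == t]) => HA.
  left; exists t, P; apply: (sepA vW sP) => p pP.
  by have := forallP HA p; rewrite pP => /eqP.
have sQ := sep_compl sP.
case: (boolP [forall p in (W :\ v) :\: P, e v p == t]) => HB.
  left; exists t, ((W :\ v) :\: P); apply: (sepA vW sQ) => p pP.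
  by have := forallP HB p; rewrite pP => /eqP.
move: HA; rewrite negb_forall => /existsP[p1]; rewrite negb_imply => /andP[p1P vp1].
move: HB; rewrite negb_forall => /existsP[q1]; rewrite negb_imply => /andP[q1Q vq1].
move: q1Q; rewrite inE => /andP[q1P q1W].
have p1W := subsetP PW' p1 p1P.
case: (boolP [forall u in W :\ v, e v u != t]) => HC.
  left; exists (~~ t), [set v]; apply/sepP; split.
  - by rewrite sub1set.
  - by apply/set0Pn; exists v; rewrite inE.
  - apply/subsetPn; exists p1; first exact: (subsetP W'W).
    by rewrite inE; apply/negP => /eqP E; move: p1W; rewrite E !inE eqxx.
  - move=> p q; rewrite inE => /eqP-> qW; rewrite inE => qv.
    by apply: neqt; have := forallP HC q; rewrite !inE qv qW.
move: HC; rewrite negb_forall => /existsP[u]; rewrite negb_imply negbK => /andP[uW /eqP vu].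
case: (boolP (u \in P)) => uP.
  exact: (inner vW sP p1P (neqt vp1) q1W q1P (neqt vq1) uP vu).
apply: (inner vW sQ (p1 := q1) (q1 := p1) (u := u)) => //; try exact: neqt;
  by rewrite in_setD ?q1P ?q1W ?p1W ?p1P ?uP ?uW.
Qed.


Lemma card3 (x y z : T) : x != y -> x != z -> y != z -> 2 < #|[set x; y; z]|.
Proof. move=> xy xz yz.
have -> : [set x; y; z] = x |: (y |: [set z]) by apply/setP => w; rewrite !inE orbA.
by rewrite !cardsU1 cards1 !inE negb_or xy xz yz.
Qed.

Lemma prime_no_sep W t P : primeb W -> sepb W t P -> False.
Proof.
case/primeP => cW HW sP; have [PW Pn0 WP H] := sepP _ _ _ sP.
case: (ltnP 1 #|P|) => cP.
  case/card_gt1P: cP => x [y [xP yP xy]].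
  by move: WP; rewrite (HW P (sep_wmod sP) x y xP yP xy).
have sQ := sep_compl sP.
have : 1 < #|W :\: P|.
  rewrite cardsD; have := subset_leq_card (subsetIr W P); lia.
case/card_gt1P => x [y [xQ yQ xy]].
have := HW _ (sep_wmod sQ) x y xQ yQ xy.
case/set0Pn: Pn0 => p pP => /subsetP/(_ p (subsetP PW p pP)).
by rewrite inE pP.
Qed.

Lemma prime_pair W t : primeb W -> exists x y, [/\ x \in W, y \in W, x != y & e x y = ~~ t].
Proof.
move=> pW; case/primeP: (pW) => cW _.
have [a aW] : exists a, a \in W by apply/set0Pn; rewrite -card_gt0; apply: ltnW (ltnW cW).
case: (boolP [forall y in W :\ a, e a y == t]) => H.
  exfalso; apply: (prime_no_sep (t := t) (P := [set a]) pW); apply/sepP; split.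
  - by rewrite sub1set.
  - by apply/set0Pn; exists a; rewrite inE.
  - apply/negP => /subset_leq_card; rewrite cards1 => c; move: cW.
    by rewrite ltnNge (leq_trans c).
  - move=> p q; rewrite inE => /eqP-> qW; rewrite inE => qa.
    by have := forallP H q; rewrite !inE qa qW => /eqP.
move: H; rewrite negb_forall => /existsP[y]; rewrite negb_imply => /andP[].
rewrite !inE => /andP[ya yW] ay; exists a, y; split => //; first by rewrite eq_sym.
by apply: neqt.
Qed.

Definition pat (s : bool) (i j : nat) :=
  if i == j then false else if (i - j == 1) || (j - i == 1) then s else ~~ s.
Definition idx := [:: 0; 1; 2; 3].
Lemma P4core (s m0 m1 m2 m3 : bool) :
  let mem i := nth false [:: m0; m1; m2; m3] i in
  all (fun i => all (fun j => all (fun k =>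
     (~~ mem i && mem j && mem k) ==> (pat s i j == pat s i k)) idx) idx) idx ->
  has (fun i => has (fun j => (i != j) && mem i && mem j) idx) idx -> [&& m0, m1, m2 & m3].
Proof. by case: s; case: m0; case: m1; case: m2; case: m3. Qed.

Lemma P4_prime a b c d s :
  (e a b = s /\ e b c = s /\ e c d = s) /\ (e a c = ~~ s /\ e b d = ~~ s /\ e a d = ~~ s) ->
  primeb [set a; b; c; d].
Proof.
move=> [[ab [bc cd]] [ac [bd ad]]].
have nsb : s != ~~ s by case: s {ab bc cd ac bd ad}.
have neq : forall x y z, e z x = s -> e z y = ~~ s -> x != y.
  move=> x y z H1 H2; apply/eqP => xy; move: H1; rewrite xy H2 => /eqP.
  by rewrite eq_sym (negbTE nsb).
have Hab : a != b by rewrite eq_sym; apply: (neq b a c); rewrite esy.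
have Hac : a != c by rewrite eq_sym; apply: (neq c a d); rewrite esy.
have Had : a != d by apply: (neq a d b) => //; rewrite esy.
have Hbc : b != c by apply: (neq b c a).
have Hbd : b != d by apply: (neq b d a).
have Hcd : c != d by apply: (neq c d b).
set g := fun i => nth a [:: a; b; c; d] i.
have epat : forall i j, i < 4 -> j < 4 -> i != j -> e (g i) (g j) = pat s i j.
  move=> i j; case: i => [|[|[|[|i]]]] // _; case: j => [|[|[|[|j]]]] //= _ _;
  rewrite /pat /=; first [ by [] | by rewrite esy ].
have Zg : forall x, x \in [set a; b; c; d] -> exists2 i, i < 4 & x = g i.
  move=> x; rewrite !inE => /orP[/orP[/orP[]|]|] /eqP->.
  - by exists 0.
  - by exists 1.
  - by exists 2.
  - by exists 3.
have gZ : forall i, i < 4 -> g i \in [set a; b; c; d].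
  by move=> i; case: i => [|[|[|[|i]]]] //= _; rewrite !inE eqxx ?orbT.
apply/primeP; split; first by apply: leq_trans (card3 Hab Hac Hbc) _; apply: subset_leq_card;
  apply/subsetP => x; rewrite !inE => /orP[/orP[]|] ->; rewrite ?orbT.
move=> M /wmodP[MZ HM] x y xM yM xy.
pose mem i := nth false [:: g 0 \in M; g 1 \in M; g 2 \in M; g 3 \in M] i.
have memE : forall i, i < 4 -> mem i = (g i \in M).
  by move=> i; case: i => [|[|[|[|i]]]].
have Hall : all (fun i => all (fun j => all (fun k =>
     (~~ mem i && mem j && mem k) ==> (pat s i j == pat s i k)) idx) idx) idx.
  apply/allP => i iI; apply/allP => j jI; apply/allP => k kI.
  have i4 : i < 4 by move: iI; case: i => [|[|[|[|i]]]].
  have j4 : j < 4 by move: jI; case: j => [|[|[|[|j]]]].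
  have k4 : k < 4 by move: kI; case: k => [|[|[|[|k]]]].
  rewrite !memE //; apply/implyP => /andP[/andP[iM jM] kM].
  have nij : i != j by apply/eqP => E; move: iM; rewrite E jM.
  have nik : i != k by apply/eqP => E; move: iM; rewrite E kM.
  by rewrite -!epat // (HM (g i) (g j) (g k)) ?gZ.
have Hhas : has (fun i => has (fun j => (i != j) && mem i && mem j) idx) idx.
  have [i i4 Ex] := Zg x (subsetP MZ x xM).
  have [j j4 Ey] := Zg y (subsetP MZ y yM).
  rewrite Ex Ey in xM yM xy.
  apply/hasP; exists i; first by move: i4; case: i {xM xy Ex} => [|[|[|[|i]]]].
  apply/hasP; exists j; first by move: j4; case: j {yM xy Ey} => [|[|[|[|j]]]].
  rewrite !memE // xM yM !andbT; apply/eqP => E; by move: xy; rewrite E eqxx.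
case/and4P: (@P4core s _ _ _ _ Hall Hhas) => gM0 gM1 gM2 gM3.
apply/subsetP => z; rewrite !inE => /orP[/orP[/orP[]|]|] /eqP->; by [].
Qed.

Lemma prime_P4 W : primeb W -> exists Z, [/\ Z \subset W, primeb Z & #|Z| <= 4].
Proof.
move=> pW; have [cW _] := primeP _ pW.
have : #|W| = (#|W| - 2).+2 by rewrite -addn2 subnK // ltnW.
move/sep_or_P4 => [[t [P sP]]|]; first by case: (prime_no_sep pW sP).
move=> [a [b [c [d [s [[aW bW cW1 dW] E]]]]]].
exists [set a; b; c; d]; split.
- by apply/subsetP => x; rewrite !inE => /orP[/orP[/orP[]|]|] /eqP->.
- exact: P4_prime E.
have -> : [set a; b; c; d] = a |: (b |: (c |: [set d])) by apply/setP => w; rewrite !inE !orbA.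
by rewrite !cardsU1 cards1; do 3 case: (_ \notin _).
Qed.


Definition unif u Z := forall z z', z \in Z -> z' \in Z -> e u z = e u z'.
Definition typ x u Z := forall z, z \in Z -> z != x -> e z u = e z x.

Lemma L_rest Z x c : primeb Z -> x \in Z -> (forall z, z \in Z -> z != x -> e z x = c) -> False.
Proof.
case/primeP => cZ HZ xZ H.
have mM : wmod Z (Z :\ x).
  apply/wmodP; split; first exact: subsetDl.
  move=> p y z pZ; rewrite !inE pZ andbT negbK => /eqP Ep /andP[yx yZ] /andP[zx zZ].
  by rewrite Ep esy H // esy H.
have : 1 < #|Z :\ x| by move: cZ; rewrite (cardsD1 x Z) xZ.
case/card_gt1P => p [q [pM qM pq]].
by move: (subsetP (HZ _ mM p q pM qM pq) x xZ); rewrite !inE eqxx.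
Qed.

Lemma L_twin Z x y : primeb Z -> x \in Z -> y \in Z -> x != y ->
  (forall z, z \in Z -> z != x -> z != y -> e z x = e z y) -> False.
Proof.
case/primeP => cZ HZ xZ yZ xy H.
have mM : wmod Z [set x; y].
  apply/wmodP; split; first by apply/subsetP => z; rewrite !inE => /orP[] /eqP->.
  move=> p a b pZ; rewrite !inE negb_or => /andP[px py].
  have Hp := H p pZ px py.
  by move=> /orP[] /eqP-> /orP[] /eqP->.
have := HZ _ mM x y; rewrite !inE !eqxx orbT => /(_ isT isT xy) /subset_leq_card.
by rewrite cards2 xy => c; move: cZ; rewrite ltnNge (leq_trans c).
Qed.

Lemma typ_unif Z x u : primeb Z -> x \in Z -> typ x u Z -> unif u Z -> False.
Proof.
move=> pZ xZ Ht Hu; apply: (L_rest (c := e u x) pZ xZ) => z zZ zx.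
by rewrite -Ht // esy (Hu z x).
Qed.

Lemma in_other M p q Z z : M \subset p |: (q |: Z) -> z \in M -> z != p -> z != q -> z \in Z.
Proof. by move=> MZ zM zp zq; move: (subsetP MZ z zM); rewrite !inE (negbTE zp) (negbTE zq). Qed.

Lemma uniqMZ Z M : primeb Z -> wmod Z (M :&: Z) -> ~~ (Z \subset M) ->
  forall p q, p \in M -> q \in M -> p \in Z -> q \in Z -> p = q.
Proof.
case/primeP => _ HZ mMZ ZM p q pM qM pZ qZ; apply/eqP/negPn/negP => pq.
have := HZ _ mMZ p q; rewrite !inE pM qM pZ qZ => /(_ isT isT pq) H.
by move: ZM; rewrite (subset_trans H) // subsetIl.
Qed.

Lemma card2Z Z p q : p \notin Z -> q \notin Z -> p != q -> #|p |: (q |: Z)| = #|Z|.+2.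
Proof. by move=> pZ qZ pq; rewrite !cardsU1 !inE negb_or pq pZ qZ. Qed.

Lemma primeA Z u w x : primeb Z -> u \notin Z -> w \notin Z -> unif u Z -> x \in Z ->
  typ x w Z -> e u w != e u x -> primeb (u |: (w |: Z)).
Proof.
move=> pZ uZ wZ Hu xZ Hw uwx.
have [cZ _] := primeP _ pZ.
set Z2 := u |: (w |: Z).
have ZZ2 : Z \subset Z2 by apply/subsetP => z zZ; rewrite !inE zZ !orbT.
apply/primeP; split.
  by apply: leq_trans cZ _; apply: subset_leq_card.
move=> M mM a b aM bM ab; have [MZ2 HM] := wmodP _ _ mM.
have uZ2 : u \in Z2 by rewrite !inE eqxx.
have wZ2 : w \in Z2 by rewrite !inE eqxx orbT.
have unifM : forall p, p \in Z2 -> p \notin M -> Z \subset M -> unif p Z.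
  move=> p pZ2 pM ZM z z' zZ z'Z; apply: HM => //; exact: (subsetP ZM).
case: (boolP (Z \subset M)) => ZM.
  have wM : w \in M.
    apply/negPn/negP => wM; exact: (typ_unif pZ xZ Hw (unifM w wZ2 wM ZM)).
  have uM : u \in M.
    apply/negPn/negP => uM; move: uwx; rewrite (HM u w x) ?eqxx //; exact: (subsetP ZM).
  by apply/subsetP => z; rewrite !inE => /orP[/eqP->|/orP[/eqP->|/(subsetP ZM)]].
have U := uniqMZ pZ (wmod_restr mM ZZ2) ZM.
exfalso.
case: (boolP (u \in M)) => uM; case: (boolP (w \in M)) => wM.
- apply: (L_rest (c := e u x) pZ xZ) => z zZ zx.
  case: (boolP (z \in M)) => zM.
    have xM : x \notin M.
      apply/negP => xM; move: zx; rewrite (U z x) ?eqxx //.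
    by rewrite esy (HM x z u) ?(subsetP ZZ2) // esy.
  by rewrite -Hw // (HM z w u) ?(subsetP ZZ2) // esy (Hu z x).
- have [y0 y0M y0Z] : exists2 y0, y0 \in M & y0 \in Z.
    case: (eqVneq a u) => [Ea|au].
      exists b => //; apply: (in_other MZ2 bM); first by rewrite -Ea eq_sym.
      by apply/eqP => E; move: wM; rewrite -E bM.
    exists a => //; apply: (in_other MZ2 aM au).
    by apply/eqP => E; move: wM; rewrite -E aM.
  apply: (L_rest (c := e u y0) pZ y0Z) => z zZ zy0.
  have zM : z \notin M.
    apply/negP => zM; move: zy0; rewrite (U z y0) ?eqxx //.
  by rewrite -(HM z u y0) ?(subsetP ZZ2) // esy (Hu z y0).
- have [y0 y0M y0Z] : exists2 y0, y0 \in M & y0 \in Z.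
    case: (eqVneq a w) => [Ea|aw].
      exists b => //; apply: (in_other MZ2 bM); last by rewrite -Ea eq_sym.
      by apply/eqP => E; move: uM; rewrite -E bM.
    exists a => //; apply: (in_other MZ2 aM _ aw).
    by apply/eqP => E; move: uM; rewrite -E aM.
  by move: uwx; rewrite (HM u w y0) // (Hu y0 x) ?eqxx.
- have aZ : a \in Z.
    apply: (in_other MZ2 aM); apply/eqP => E; [move: uM | move: wM]; by rewrite -E aM.
  have bZ : b \in Z.
    apply: (in_other MZ2 bM); apply/eqP => E; [move: uM | move: wM]; by rewrite -E bM.
  by move: ab; rewrite (U a b) ?eqxx.
Qed.


Lemma primeB Z v u x y : primeb Z -> v \notin Z -> u \notin Z -> x \in Z -> y \in Z -> x != y ->
  typ x v Z -> typ y u Z -> e u v != e u x -> primeb (v |: (u |: Z)).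
Proof.
move=> pZ vZ uZ xZ yZ xy Hv Hu uvx.
have [cZ _] := primeP _ pZ.
set Z2 := v |: (u |: Z).
have ZZ2 : Z \subset Z2 by apply/subsetP => z zZ; rewrite !inE zZ !orbT.
apply/primeP; split.
  by apply: leq_trans cZ _; apply: subset_leq_card.
move=> M mM a b aM bM ab; have [MZ2 HM] := wmodP _ _ mM.
have vZ2 : v \in Z2 by rewrite !inE eqxx.
have uZ2 : u \in Z2 by rewrite !inE eqxx orbT.
have unifM : forall p, p \in Z2 -> p \notin M -> Z \subset M -> unif p Z.
  move=> p pZ2 pM ZM z z' zZ z'Z; apply: HM => //; exact: (subsetP ZM).
have yx : y != x by rewrite eq_sym.
case: (boolP (Z \subset M)) => ZM.
  have vM : v \in M.
    apply/negPn/negP => vM; exact: (typ_unif pZ xZ Hv (unifM v vZ2 vM ZM)).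
  have uM : u \in M.
    apply/negPn/negP => uM; exact: (typ_unif pZ yZ Hu (unifM u uZ2 uM ZM)).
  by apply/subsetP => z; rewrite !inE => /orP[/eqP->|/orP[/eqP->|/(subsetP ZM)]].
have U := uniqMZ pZ (wmod_restr mM ZZ2) ZM.
exfalso.
case: (boolP (v \in M)) => vM; case: (boolP (u \in M)) => uM.
- apply: (L_twin pZ xZ yZ xy) => z zZ zx zy.
  case: (boolP (z \in M)) => zM.
    have xM : x \notin M.
      apply/negP => xM; move: zx; rewrite (U z x) ?eqxx //.
    have yM : y \notin M.
      apply/negP => yM; move: zy; rewrite (U z y) ?eqxx //.
    rewrite esy (HM x z u) ?(subsetP ZZ2) // Hu // esy (esy z y).
    by rewrite (HM y z v) ?(subsetP ZZ2) // Hv.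
  by rewrite -Hv // (HM z v u) ?(subsetP ZZ2) // Hu.
- have [y0 y0M y0Z] : exists2 y0, y0 \in M & y0 \in Z.
    case: (eqVneq a v) => [Ea|av].
      exists b => //; apply: (in_other MZ2 bM); first by rewrite -Ea eq_sym.
      by apply/eqP => E; move: uM; rewrite -E bM.
    exists a => //; apply: (in_other MZ2 aM av).
    by apply/eqP => E; move: uM; rewrite -E aM.
  have Huv : e u v = e u y0 by apply: HM.
  case: (eqVneq y0 x) => [E|y0x]; first by move: uvx; rewrite Huv E eqxx.
  apply: (L_twin pZ xZ y0Z (y := y0)); first by rewrite eq_sym.
  move=> z zZ zx zy0.
  have zM : z \notin M.
    apply/negP => zM; move: zy0; rewrite (U z y0) ?eqxx //.
  by rewrite -Hv // (HM z v y0) ?(subsetP ZZ2).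
- have [y0 y0M y0Z] : exists2 y0, y0 \in M & y0 \in Z.
    case: (eqVneq a u) => [Ea|au].
      exists b => //; apply: (in_other MZ2 bM); last by rewrite -Ea eq_sym.
      by apply/eqP => E; move: vM; rewrite -E bM.
    exists a => //; apply: (in_other MZ2 aM _ au).
    by apply/eqP => E; move: vM; rewrite -E aM.
  have Hvu : e v u = e v y0 by apply: HM.
  case: (eqVneq y0 y) => [E|y0y].
    have : e u v = e u x.
      by rewrite esy Hvu E (esy v y) Hv // (esy y x) -Hu // esy.
    by move=> E'; move: uvx; rewrite E' eqxx.
  apply: (L_twin pZ yZ y0Z (y := y0)); first by rewrite eq_sym.
  move=> z zZ zy zy0.
  have zM : z \notin M.
    apply/negP => zM; move: zy0; rewrite (U z y0) ?eqxx //.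
  by rewrite -Hu // (HM z u y0) ?(subsetP ZZ2).
- have aZ : a \in Z.
    apply: (in_other MZ2 aM); apply/eqP => E; [move: vM | move: uM]; by rewrite -E aM.
  have bZ : b \in Z.
    apply: (in_other MZ2 bM); apply/eqP => E; [move: vM | move: uM]; by rewrite -E bM.
  by move: ab; rewrite (U a b) ?eqxx.
Qed.


Lemma classify Z u : primeb Z -> u \notin Z -> ~~ primeb (u |: Z) ->
  unif u Z \/ exists2 x, x \in Z & typ x u Z.
Proof.
move=> pZ uZ npZ; have [cZ _] := primeP _ pZ.
have ZZ1 : Z \subset u |: Z by apply/subsetP => z zZ; rewrite !inE zZ orbT.
have c1 : 2 < #|u |: Z| by apply: leq_trans cZ (subset_leq_card ZZ1).
move: npZ; rewrite /primeb c1 /= negb_forall => /existsP[M].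
rewrite negb_imply => /andP[mM]; rewrite negb_forall => /existsP[a].
rewrite negb_imply => /andP[aM]; rewrite negb_forall => /existsP[b].
rewrite negb_imply => /andP[bM]; rewrite negb_imply => /andP[ab nsub].
have [MZ1 HM] := wmodP _ _ mM.
have uZ1 : u \in u |: Z by rewrite !inE eqxx.
case: (boolP (Z \subset M)) => ZM.
  have uM : u \notin M.
    apply/negP => uM; move: nsub; apply/negP/negPn/subsetP => z.
    by rewrite !inE => /orP[/eqP->|/(subsetP ZM)].
  by left => z z' zZ z'Z; apply: HM => //; apply: (subsetP ZM).
have U := uniqMZ pZ (wmod_restr mM ZZ1) ZM.
have inZ : forall z, z \in M -> z != u -> z \in Z.
  by move=> z zM zu; move: (subsetP MZ1 z zM); rewrite !inE (negbTE zu).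
case: (boolP (u \in M)) => uM; last first.
  have au : a != u by apply/eqP => E; move: uM; rewrite -E aM.
  have bu : b != u by apply/eqP => E; move: uM; rewrite -E bM.
  by move: ab; rewrite (U a b) ?eqxx ?inZ.
have [x xM xZ] : exists2 x, x \in M & x \in Z.
  case: (eqVneq a u) => [Ea|au]; last by exists a => //; apply: inZ.
  by exists b => //; apply: inZ; rewrite // -Ea eq_sym.
right; exists x => // z zZ zx.
have zM : z \notin M.
  apply/negP => zM; move: zx; rewrite (U z x) ?eqxx //.
by apply: HM; rewrite // (subsetP ZZ1).
Qed.

Definition typb Z x w := [forall z in Z, (z != x) ==> (e z w == e z x)].
Lemma typP Z x w : reflect (typ x w Z) (typb Z x w).
Proof.
apply: (iffP forallP) => [H z zZ zx|H z]; last first.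
  by apply/implyP => zZ; apply/implyP => zx; apply/eqP; apply: H.
by have := H z; rewrite zZ zx => /eqP.
Qed.

Lemma notwmod W C : C \subset W -> ~~ wmod W C ->
  exists p a b, [/\ p \in W, p \notin C, a \in C, b \in C & e p a != e p b].
Proof.
move=> CW; rewrite /wmod CW /= negb_forall => /existsP[p].
rewrite negb_imply inE => /andP[/andP[pC pW]].
rewrite negb_forall => /existsP[a]; rewrite negb_imply => /andP[aC].
rewrite negb_forall => /existsP[b]; rewrite negb_imply => /andP[bC pab].
by exists p, a, b.
Qed.

Lemma ER W Z : primeb W -> primeb Z -> Z \subset W -> 1 < #|W :\: Z| ->
  exists Z', [/\ Z \subset Z', Z' \subset W, primeb Z', #|Z| < #|Z'| & #|Z'| <= #|Z|.+2].
Proof.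
move=> pW pZ ZW cD.
have [cZ _] := primeP _ pZ; have [_ HW] := primeP _ pW.
case: (boolP [exists u in W :\: Z, primeb (u |: Z)]).
  case/existsP => u; rewrite inE => /andP[/andP[uZ uW] pu].
  exists (u |: Z); split => //.
  - by apply/subsetP => z zZ; rewrite !inE zZ orbT.
  - by apply/subsetP => z; rewrite !inE => /orP[/eqP->|/(subsetP ZW)].
  - by rewrite cardsU1 uZ.
  - by rewrite cardsU1 uZ.
rewrite negb_exists => /forallP HN.
have cls : forall u, u \in W -> u \notin Z -> unif u Z \/ exists2 x, x \in Z & typ x u Z.
  move=> u uW uZ; apply: classify => //.
  by have := HN u; rewrite !inE uZ uW.
have [z0 z0Z] : exists z0, z0 \in Z by apply/set0Pn; rewrite -card_gt0 ltnW // ltnW.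
case: (boolP [exists v in W :\: Z, [forall z in Z, forall z' in Z, e v z == e v z']]).
  case/existsP => v; rewrite inE => /andP[/andP[vZ vW] /forallP Hv].
  have uv : unif v Z.
    by move=> z z' zZ z'Z; have := Hv z; rewrite zZ => /forallP/(_ z'); rewrite z'Z => /eqP.
  set C := Z :|: [set w in W :\: Z | [exists x in Z, typb Z x w]].
  have CW : C \subset W.
    by apply/subsetP => w; rewrite !inE => /orP[/(subsetP ZW)|/andP[/andP[]]].
  have nC : ~~ wmod W C.
    apply/negP => mC.
    have : 1 < #|Z| by apply: ltnW.
    case/card_gt1P => p [q [pZ1 qZ1 pq]].
    have := HW C mC p q; rewrite !inE pZ1 qZ1 /= => /(_ isT isT pq) /subsetP/(_ v vW).
    rewrite !inE (negbTE vZ) vW /= => /existsP[x]; rewrite andbC => /andP[/typP tx xZ].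
    exact: (typ_unif pZ xZ tx uv).
  have [u [a [b [uW uC aC bC uab]]]] := notwmod CW nC.
  have uZ : u \notin Z by apply: contra uC; rewrite !inE => ->.
  have uu : unif u Z.
    case: (cls u uW uZ) => // [[x xZ tx]].
    by move: uC; rewrite !inE (negbTE uZ) /= => /negP; case; rewrite uW; apply/existsP; exists x; rewrite xZ; apply/typP.
  have [w [wC wZ wu]] : exists w, [/\ w \in C, w \notin Z & e u w != e u z0].
    case: (boolP (e u a == e u z0)) => Ha.
      exists b; split => //; last by apply: contra uab => /eqP->.
      apply/negP => bZ; move: uab; rewrite (eqP Ha) (uu z0 b) ?eqxx //.
    exists a; split => //.
    apply/negP => aZ; move: Ha; rewrite (uu z0 a) ?eqxx //.
  have [x xZ tx] : exists2 x, x \in Z & typ x w Z.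
    move: wC; rewrite !inE (negbTE wZ) /= => /andP[_] /existsP[x]; rewrite andbC.
    by move=> /andP[/typP tx xZ]; exists x.
  have uw : u != w by apply/eqP => E; move: uC; rewrite E wC.
  exists (u |: (w |: Z)); split.
  - by apply/subsetP => z zZ; rewrite !inE zZ !orbT.
  - apply/subsetP => z; rewrite !inE => /orP[/eqP->//|/orP[/eqP->|/(subsetP ZW)//]].
    exact: (subsetP CW).
  - by apply: (primeA pZ uZ wZ uu xZ tx); rewrite -(uu z0 x).
  - by rewrite card2Z.
  - by rewrite card2Z.
rewrite negb_exists => /forallP HU.
have nonunif : forall u, u \in W -> u \notin Z -> exists2 x, x \in Z & typ x u Z.
  move=> u uW uZ; case: (cls u uW uZ) => // uu.
  have := HU u; rewrite !inE uZ uW /= => /negP; case.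
  apply/forallP => z; apply/implyP => zZ; apply/forallP => z'; apply/implyP => z'Z.
  by apply/eqP; apply: uu.
have [v0 v0D] : exists v0, v0 \in W :\: Z by apply/set0Pn; rewrite -card_gt0 ltnW.
move: v0D; rewrite inE => /andP[v0Z v0W].
have [x xZ tx0] := nonunif v0 v0W v0Z.
set X := x |: [set w in W :\: Z | typb Z x w].
have XW : X \subset W.
  by apply/subsetP => w; rewrite !inE => /orP[/eqP->|/andP[/andP[]]] //; apply: (subsetP ZW).
have nX : ~~ wmod W X.
  apply/negP => mX.
  have v0X : v0 \in X by rewrite !inE v0Z v0W /=; apply/orP; right; apply/typP.
  have xX : x \in X by rewrite !inE eqxx.
  have xv0 : x != v0 by apply/eqP => E; move: v0Z; rewrite -E xZ.
  have WX := HW X mX x v0 xX v0X xv0.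
  have : 1 < #|Z :\ x| by move: cZ; rewrite (cardsD1 x Z) xZ.
  move/ltnW; case/card_gt0P => z; rewrite !inE => /andP[zx zZ].
  by move: (subsetP WX z (subsetP ZW z zZ)); rewrite !inE (negbTE zx) zZ.
have [u [a [b [uW uX aX bX uab]]]] := notwmod XW nX.
have Xx : forall p w, p \in Z -> p != x -> w \in X -> e p w = e p x.
  move=> p w pZ0 px; rewrite !inE => /orP[/eqP->//|/andP[_ /typP tw]].
  exact: tw.
have uZ : u \notin Z.
  apply/negP => uZ.
  have ux : u != x by apply/eqP => E; move: uX; rewrite E !inE eqxx.
  by move: uab; rewrite (Xx u a) // (Xx u b) // eqxx.
have [y yZ ty] := nonunif u uW uZ.
have yx : x != y.
  apply/eqP => E; move: uX; rewrite !inE uZ uW /=; case/norP => _ /negP; case.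
  by apply/typP; rewrite E.
have [v [vX vx vu]] : exists v, [/\ v \in X, v != x & e u v != e u x].
  case: (boolP (e u a == e u x)) => Ha.
    exists b; split => //; last by rewrite -(eqP Ha) eq_sym.
    by apply/eqP => E; move: uab; rewrite E Ha.
  by exists a; split => //; apply/eqP => E; move: Ha; rewrite E eqxx.
have [vZ vW tv] : [/\ v \notin Z, v \in W & typ x v Z].
  by move: vX; rewrite !inE (negbTE vx) /= => /andP[/andP[vZ vW] /typP tv].
have vu' : v != u by apply/eqP => E; move: uX; rewrite -E vX.
exists (v |: (u |: Z)); split.
- by apply/subsetP => z zZ; rewrite !inE zZ !orbT.
- by apply/subsetP => z; rewrite !inE => /orP[/eqP->//|/orP[/eqP->//|/(subsetP ZW)]].
- exact: (primeB pZ vZ uZ xZ yZ yx tv ty vu).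
- by rewrite card2Z.
- by rewrite card2Z.
Qed.


Lemma grow W k n : primeb W -> k < #|W| -> forall Z, primeb Z -> Z \subset W ->
  #|W| - #|Z| <= n ->
  exists Z', [/\ Z' \subset W, primeb Z', k < #|Z'| & #|Z'| <= maxn #|Z| k.+2].
Proof.
move=> pW kW; elim: n => [|n IH] Z pZ ZW cn.
  case: (ltnP k #|Z|) => kZ; first by exists Z; split => //; rewrite leq_maxl.
  by exfalso; move: cn kZ kW; lia.
case: (ltnP k #|Z|) => kZ; first by exists Z; split => //; rewrite leq_maxl.
have cD : #|W :\: Z| = #|W| - #|Z| by rewrite cardsD (setIidPr ZW).
have cZW := subset_leq_card ZW.
case: (ltnP 1 #|W :\: Z|) => c1.
  have [Z1 [ZZ1 Z1W pZ1 c2 c3]] := ER pW pZ ZW c1.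
  have [Z' [Z'W pZ' kZ' cZ']] := IH Z1 pZ1 Z1W ltac:(have := subset_leq_card Z1W; lia).
  exists Z'; split => //; apply: (leq_trans cZ'); rewrite geq_max leq_maxr andbT.
  by apply: leq_trans c3 _; apply: leq_trans (leq_maxr _ _); lia.
exists W; split => //.
by apply: leq_trans (leq_maxr _ _); lia.
Qed.

Lemma shrink W k : primeb W -> k < #|W| ->
  exists Z, [/\ Z \subset W, primeb Z, k < #|Z| & #|Z| <= k + 4].
Proof.
move=> pW kW; have [Z0 [Z0W pZ0 c0]] := prime_P4 pW.
have [Z' [Z'W pZ' kZ' cZ']] := grow pW kW pZ0 Z0W (leqnn _).
exists Z'; split => //; apply: (leq_trans cZ'); rewrite geq_max; apply/andP; split; lia.
Qed.


Lemma moduleE M : module e M = wmod setT M.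
Proof.
apply/idP/idP.
  move=> /forallP H; apply/wmodP; split; first exact: subsetT.
  move=> x y z _ xM yM zM; have := H x; rewrite xM /= => /orP[] /forallP Hx.
    by have := Hx y; have := Hx z; rewrite yM zM /= => -> ->.
  by have := Hx y; have := Hx z; rewrite yM zM /= => /negbTE-> /negbTE->.
move=> /wmodP[_ H]; apply/forallP => x; apply/implyP => xM.
case: (boolP [forall y in M, e x y]) => //= /forallPn[y1]; rewrite negb_imply => /andP[y1M nxy1].
apply/forallP => y; apply/implyP => yM.
by rewrite (H x y y1) // in_setT.
Qed.

Lemma moduleP M : reflect (forall x y z, x \notin M -> y \in M -> z \in M -> e x y = e x z)
  (module e M).
Proof.
rewrite moduleE; apply: (iffP (wmodP _ _)) => [[_ H] x y z|H]; first by apply: H; rewrite in_setT.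
by split; [apply: subsetT | move=> x y z _; apply: H].
Qed.

Lemma noov A B : ~~ overlap A B -> A :&: B != set0 -> (A \subset B) \/ (B \subset A).
Proof.
rewrite /overlap => H I0; move: H; rewrite I0 /= negb_and !negbK.
by case/orP; [left | right].
Qed.

Lemma strongT : strong e setT.
Proof.
apply/andP; split; first by apply/moduleP => x y z; rewrite in_setT.
apply/forallP => M; apply/implyP => _; rewrite /overlap subsetT.
by rewrite !andbF.
Qed.

Lemma strong1 x : strong e [set x].
Proof.
apply/andP; split.
  apply/moduleP => p y z _; rewrite !inE => /eqP-> /eqP->; by [].
apply/forallP => M; apply/implyP => _; rewrite /overlap sub1set.
case: (boolP (x \in M)) => xM /=; first by rewrite andbF.
rewrite (_ : [set x] :&: M = set0) ?eqxx //.
by apply/setP => y; rewrite !inE; apply/negP => /andP[/eqP-> ]; rewrite (negbTE xM).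
Qed.

Lemma strong_mod M : strong e M -> module e M.
Proof. by case/andP. Qed.

Lemma strong_noov M M' : strong e M -> module e M' -> ~~ overlap M M'.
Proof. by case/andP => _ /forallP H mM'; have := H M'; rewrite mM'. Qed.

Lemma strong_cases M M' u : strong e M -> module e M' -> u \in M -> u \in M' ->
  (M \subset M') \/ (M' \subset M).
Proof.
move=> sM mM' uM uM'; apply: noov (strong_noov sM mM') _.
by apply/set0Pn; exists u; rewrite inE uM uM'.
Qed.

Lemma mchildP N C : reflect [/\ strong e C, C \proper N &
   forall M', strong e M' -> M' \proper N -> C \subset M' -> M' = C] (mchild e N C).
Proof.
apply: (iffP and3P) => [[H1 H2 /forallP H3]|[H1 H2 H3]]; split => //.
  move=> M' sM' pM' CM'; have := H3 M'; rewrite sM' pM' CM' /= => /eqP; by [].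
apply/forallP => M'; apply/implyP => /andP[/andP[sM' pM'] CM'].
by apply/eqP; apply: H3.
Qed.

Lemma child_exists N x : 1 < #|N| -> x \in N -> exists C, mchild e N C && (x \in C).
Proof.
move=> cN xN.
have p1 : [set x] \proper N.
  apply/properP; split; first by rewrite sub1set.
  case/card_gt1P: cN => a [b [aN bN ab]].
  case: (eqVneq a x) => [E|ax]; last by exists a; rewrite // inE.
  by exists b; rewrite // inE; rewrite -E eq_sym.
case: (arg_maxnP (fun M => #|M|) (i0 := [set x])
   (P := fun M => [&& strong e M, M \proper N & x \in M])).
  by rewrite strong1 p1 inE eqxx.
move=> C /and3P[sC pC xC] Cmax; exists C; rewrite xC andbT.
apply/mchildP; split => // M' sM' pM' CM'.
apply/eqP; rewrite eq_sym eqEcard CM' /=.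
by apply: Cmax; rewrite sM' pM' (subsetP CM').
Qed.

Lemma child_disj N (C1 C2 : {set T}) u : mchild e N C1 -> mchild e N C2 -> u \in C1 -> u \in C2 -> C1 = C2.
Proof.
move=> /mchildP[s1 p1 m1] /mchildP[s2 p2 m2] u1 u2.
case: (strong_cases s1 (strong_mod s2) u1 u2) => H.
  by symmetry; apply: m1.
by apply: m2.
Qed.

Lemma child_sub N C : mchild e N C -> C \subset N.
Proof. by case/mchildP => _ /properP[]. Qed.

Lemma child_ne N C : 1 < #|N| -> mchild e N C -> exists x, x \in C.
Proof.
move=> cN /mchildP[sC pC mC].
have [x xN] : exists x, x \in N by apply/card_gt0P; apply: ltnW.
case: (boolP (C == set0)) => [/eqP C0|/set0Pn//]; exfalso.
have [z zN] : exists z, z \in N by exists x.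
have p1 : [set z] \proper N.
  apply/properP; split; first by rewrite sub1set.
  case/card_gt1P: cN => a [b [aN bN ab]].
  case: (eqVneq a z) => [E|az]; last by exists a; rewrite // inE.
  by exists b; rewrite // inE; rewrite -E eq_sym.
have := mC _ (strong1 z) p1; rewrite C0 sub0set => /(_ isT) /setP/(_ z).
by rewrite !inE eqxx.
Qed.

Lemma unif_disj A B a a' b b' : module e A -> module e B -> A :&: B = set0 ->
  a \in A -> a' \in A -> b \in B -> b' \in B -> e a b = e a' b'.
Proof.
move=> /moduleP HA /moduleP HB AB aA a'A bB b'B.
have nB : forall p, p \in A -> p \notin B.
  by move=> p pA; apply/negP => pB; move/setP: AB => /(_ p); rewrite !inE pA pB.
have nA : forall p, p \in B -> p \notin A.
  by move=> p pB; apply/negP => pA; move/setP: AB => /(_ p); rewrite !inE pA pB.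
rewrite (HB a b b') ?nB // esy (HA b' a a') ?nA // esy.
Qed.

Lemma disj_children N (C1 C2 : {set T}) : mchild e N C1 -> mchild e N C2 -> C1 != C2 -> C1 :&: C2 = set0.
Proof.
move=> m1 m2 C12; apply/setP => u; rewrite !inE; apply/negP => /andP[u1 u2].
by move: C12; rewrite (child_disj m1 m2 u1 u2) eqxx.
Qed.


Lemma qadjE (C1 C2 : {set T}) x y : module e C1 -> module e C2 -> C1 :&: C2 = set0 ->
  x \in C1 -> y \in C2 -> qadj e C1 C2 = e x y.
Proof.
move=> m1 m2 I0 xC yC; apply/idP/idP.
  by move=> /forallP/(_ x); rewrite xC => /forallP/(_ y); rewrite yC.
move=> exy; apply/forallP => a; apply/implyP => aC; apply/forallP => b; apply/implyP => bC.
by rewrite (unif_disj m1 m2 I0 aC xC bC yC).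
Qed.

Lemma prime_notk X k : primeb X -> k < #|X| -> ~ k_modular e k.
Proof.
move=> pX kX Hk.
have [cX HX] := primeP _ pX.
case: (arg_minnP (fun M => #|M|) (i0 := setT) (P := fun M => strong e M && (X \subset M))).
  by rewrite strongT subsetT.
move=> N /andP[sN XN] Nmin.
have cN : 1 < #|N| by apply: leq_trans (ltnW cX) (subset_leq_card XN).
pose ch x := odflt set0 [pick C | mchild e N C && (x \in C)].
have chP : forall x, x \in N -> mchild e N (ch x) && (x \in ch x).
  move=> x xN; rewrite /ch; case: pickP => [C //|H].
  by have [C HC] := child_exists cN xN; move: (H C); rewrite HC.
have chinj : {in X &, injective ch}.
  move=> x y xX yX E; apply/eqP/negPn/negP => xy.
  have xN := subsetP XN x xX; have yN := subsetP XN y yX.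
  case/andP: (chP x xN) => mx xC; case/andP: (chP y yN) => _; rewrite -E => yC.
  case/mchildP: (mx) => sC pC _.
  have mC : wmod X (ch x :&: X).
    by apply: (wmod_restr (W := setT)); [rewrite -moduleE; exact: strong_mod | apply: subsetT].
  have := HX _ mC x y; rewrite !inE xC yC xX yX => /(_ isT isT xy) XC.
  have XC' : X \subset ch x by apply: subset_trans XC (subsetIl _ _).
  have := Nmin (ch x); rewrite sC XC' => /(_ isT).
  by rewrite leqNgt (proper_card pC).
have cch : #|X| <= #|children e N|.
  rewrite -(card_in_imset chinj); apply: subset_leq_card; apply/subsetP => C /imsetP[x xX ->].
  by rewrite inE; case/andP: (chP x (subsetP XN x xX)).
have qE : forall x y, x \in X -> y \in X -> x != y ->
   [/\ ch x \in children e N, ch y \in children e N, ch x != ch y & qadj e (ch x) (ch y) = e x y].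
  move=> x y xX yX xy.
  have xN := subsetP XN x xX; have yN := subsetP XN y yX.
  case/andP: (chP x xN) => mx xC; case/andP: (chP y yN) => my yC.
  have cxy : ch x != ch y by apply/eqP => E; move: xy; rewrite (chinj x y xX yX E) eqxx.
  split; rewrite ?inE //.
  case/mchildP: (mx) => sx _ _; case/mchildP: (my) => sy _ _.
  by apply: qadjE; rewrite ?strong_mod // (disj_children mx my).
have pn : prime_node e N.
  rewrite /prime_node sN cN /=; apply/andP; split.
    have [x [y [xX yX xy /= exy]]] := prime_pair false pX.
    have [cx cy cxy q] := qE x y xX yX xy.
    apply/negP => /forallP/(_ (ch x)); rewrite cx => /forallP/(_ (ch y)); rewrite cy cxy /=.
    by rewrite q exy.
  have [x [y [xX yX xy /= exy]]] := prime_pair true pX.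
  have [cx cy cxy q] := qE x y xX yX xy.
  apply/negP => /forallP/(_ (ch x)); rewrite cx => /forallP/(_ (ch y)); rewrite cy cxy /=.
  by rewrite q exy.
by have := Hk N pn; move: cch kX; lia.
Qed.


Lemma node_prime N : prime_node e N -> exists X, primeb X /\ #|X| = #|children e N|.
Proof.
case/and4P => sN cN nE nC.
have mN := strong_mod sN.
have [n0 n0N] : exists n0, n0 \in N by apply/card_gt0P; apply: ltnW.
pose rep C := odflt n0 [pick x in C].
have repP : forall C, C \in children e N -> rep C \in C.
  move=> C; rewrite inE => mC; rewrite /rep; case: pickP => [x //|H].
  by have [x xC] := child_ne cN mC; move: (H x); rewrite xC.
pose ch u := odflt set0 [pick C | mchild e N C && (u \in C)].
have chP : forall u, u \in N -> (ch u \in children e N) && (u \in ch u).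
  move=> u uN; rewrite /ch inE; case: pickP => [C //|H].
  by have [C HC] := child_exists cN uN; move: (H C); rewrite HC.
have chE : forall C u, C \in children e N -> u \in C -> ch u = C.
  move=> C u; rewrite inE => mC uC.
  have uN := subsetP (child_sub mC) u uC.
  case/andP: (chP u uN); rewrite inE => mu uu; exact: child_disj mu mC uu uC.
have repinj : {in children e N &, injective rep}.
  move=> C1 C2 c1 c2 E; have h1 := chE C1 (rep C1) c1 (repP C1 c1).
  by rewrite -h1 E; apply: chE => //; apply: repP.
have U2 : forall C1 C2 a b, C1 \in children e N -> C2 \in children e N -> C1 != C2 ->
    a \in C1 -> b \in C2 -> e a b = e (rep C1) (rep C2).
  move=> C1 C2 a b; rewrite !inE => m1 m2 C12 aC bC.
  case/mchildP: (m1) => s1 _ _; case/mchildP: (m2) => s2 _ _.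
  apply: (unif_disj (strong_mod s1) (strong_mod s2) (disj_children m1 m2 C12)) => //.
  - by apply: repP; rewrite inE.
  - by apply: repP; rewrite inE.
have qE : forall C1 C2, C1 \in children e N -> C2 \in children e N -> C1 != C2 ->
    qadj e C1 C2 = e (rep C1) (rep C2).
  move=> C1 C2 c1 c2 C12; move: (c1) (c2); rewrite !inE => m1 m2.
  case/mchildP: (m1) => s1 _ _; case/mchildP: (m2) => s2 _ _.
  by apply: qadjE; rewrite ?strong_mod ?(disj_children m1 m2 C12) ?repP.
set X := [set rep C | C in children e N].
have cX : #|X| = #|children e N| by rewrite card_in_imset.
have repne : forall C1 C2, C1 \in children e N -> C2 \in children e N -> C1 != C2 -> rep C1 != rep C2.
  by move=> C1 C2 c1 c2; apply: contra => /eqP /repinj ->.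
move: nE; rewrite negb_forall => /existsP[M1]; rewrite negb_imply => /andP[c1].
rewrite negb_forall => /existsP[M2]; rewrite negb_imply => /andP[c2].
rewrite negb_imply negbK => /andP[M12 q12].
move: nC; rewrite negb_forall => /existsP[M3]; rewrite negb_imply => /andP[c3].
rewrite negb_forall => /existsP[M4]; rewrite negb_imply => /andP[c4].
rewrite negb_imply => /andP[M34 q34].
have OV : ovhyp X.
  move=> Y a b mY aY bY ab XY.
  have [YX HY] := wmodP _ _ mY.
  set S := [set C in children e N | rep C \in Y].
  set U := \bigcup_(C in S) C.
  have inU : forall u, u \in N -> (u \in U) = (ch u \in S).
    move=> u uN; case/andP: (chP u uN) => cu uu.
    apply/bigcupP/idP => [[C CS uC]|chS]; last by exists (ch u).
    by move: (CS); rewrite inE => /andP[cC _]; rewrite (chE C u).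
  have UN : U \subset N.
    apply/subsetP => u /bigcupP[C]; rewrite inE => /andP[]; rewrite inE => mC _ uC.
    exact: (subsetP (child_sub mC)).
  have mU : module e U.
    apply/moduleP => v p q vU pU qU.
    have pN := subsetP UN p pU; have qN := subsetP UN q qU.
    case: (boolP (v \in N)) => vN; last by apply: (moduleP _ mN).
    case/andP: (chP v vN) => cv vv; case/andP: (chP p pN) => cp pp; case/andP: (chP q qN) => cq qq.
    have vS : ch v \notin S by rewrite -inU.
    have pS : ch p \in S by rewrite -inU.
    have qS : ch q \in S by rewrite -inU.
    have nvp : ch v != ch p by apply: contra vS => /eqP->.
    have nvq : ch v != ch q by apply: contra vS => /eqP->.
    rewrite (U2 _ _ v p cv cp nvp vv pp) (U2 _ _ v q cv cq nvq vv qq).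
    apply: HY.
    - by apply/imsetP; exists (ch v).
    - by move: vS; rewrite inE cv.
    - by move: pS; rewrite inE => /andP[].
    - by move: qS; rewrite inE => /andP[].
  have [Ca ca Ea] : exists2 C, C \in children e N & a = rep C.
    by move: (subsetP YX a aY) => /imsetP[C cC ->]; exists C.
  have [Cb cb Eb] : exists2 C, C \in children e N & b = rep C.
    by move: (subsetP YX b bY) => /imsetP[C cC ->]; exists C.
  rewrite Eb in bY ab; rewrite Ea in aY ab.
  have CaS : Ca \in S by rewrite inE ca aY.
  have CbS : Cb \in S by rewrite inE cb bY.
  have CaU : Ca \subset U by apply/subsetP => u uC; apply/bigcupP; exists Ca.
  have nsU : ~~ strong e U.
    apply/negP => sU.
    have pU : U \proper N.
      apply/properP; split => //.
      case/subsetPn: XY => x0 /imsetP[C0 c0 ->] x0Y.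
      have mC0 : mchild e N C0 by move: (c0); rewrite inE.
      have rN := subsetP (child_sub mC0) _ (repP C0 c0).
      exists (rep C0) => //.
      by rewrite inU // (chE C0 _ c0 (repP C0 c0)) inE c0 (negbTE x0Y).
    move: (ca); rewrite inE => /mchildP[_ _ mx].
    have E := mx U sU pU CaU.
    have rb : rep Cb \in Ca by rewrite -E; apply/bigcupP; exists Cb => //; apply: repP.
    have := chE Ca (rep Cb) ca rb; rewrite (chE Cb) ?repP // => E2.
    by move: ab; rewrite E2 eqxx.
  move: nsU; rewrite /strong mU /= negb_forall => /existsP[M']; rewrite negb_imply negbK.
  move=> /andP[mM' ov]; case/and3P: (ov) => /set0Pn[u0]; rewrite inE => /andP[u0U u0M'] nUM nMU.
  have u0N := subsetP UN u0 u0U.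
  have M'N : M' \subset N.
    case: (strong_cases sN mM' u0N u0M') => // NM.
    by move: nUM; rewrite (subset_trans UN NM).
  have Cwhole : forall C u, C \in children e N -> u \in C -> u \in M' -> C \subset M'.
    move=> C u cC uC uM'; move: (cC); rewrite inE => /mchildP[sC _ _].
    case: (strong_cases sC mM' uC uM') => // M'C.
    have u0C := subsetP M'C u0 u0M'.
    have := inU u0 u0N; rewrite u0U (chE C u0) // => /esym CS.
    exfalso; move/negP: nMU; apply; apply/subsetP => w wM'; apply/bigcupP; exists C => //.
    exact: (subsetP M'C).
  exists (M' :&: X); split.
    by apply: (wmod_restr (W := setT)); [rewrite -moduleE | apply: subsetT].
  apply/and3P; split.
  - apply/set0Pn; case/andP: (chP u0 u0N) => c0 u0C.
    exists (rep (ch u0)); rewrite !inE; apply/andP; split.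
      by move: (inU u0 u0N); rewrite u0U inE => /esym/andP[].
    apply/andP; split; last by apply/imsetP; exists (ch u0).
    by apply: (subsetP (Cwhole _ _ c0 u0C u0M')); apply: repP.
  - case/subsetPn: nUM => u1 u1U u1M'.
    have u1N := subsetP UN u1 u1U.
    case/andP: (chP u1 u1N) => c1' u1C.
    apply/subsetPn; exists (rep (ch u1)).
      by move: (inU u1 u1N); rewrite u1U inE => /esym/andP[].
    rewrite !inE negb_and; apply/orP; left; apply/negP => rM'.
    by move: u1M'; rewrite (subsetP (Cwhole _ _ c1' (repP _ c1') rM')).
  - case/subsetPn: nMU => u2 u2M' u2U.
    have u2N := subsetP M'N u2 u2M'.
    case/andP: (chP u2 u2N) => c2' u2C.
    apply/subsetPn; exists (rep (ch u2)).
      rewrite !inE; apply/andP; split; last by apply/imsetP; exists (ch u2).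
      by apply: (subsetP (Cwhole _ _ c2' u2C u2M')); apply: repP.
    apply/negP => rY; move: u2U; rewrite inU // inE c2' rY.
    by [].
exists X; split => //.
apply/primeP; split.
  have r12 := repne _ _ c1 c2 M12; have r34 := repne _ _ c3 c4 M34.
  rewrite qE // in q12; rewrite qE // in q34.
  have inX : forall C, C \in children e N -> rep C \in X by move=> C cC; apply/imsetP; exists C.
  have c3s : forall x y z, x \in X -> y \in X -> z \in X -> x != y -> x != z -> y != z -> 2 < #|X|.
    move=> x y z xX yX zX xy xz yz; apply: leq_trans (card3 xy xz yz) _.
    apply: subset_leq_card; apply/subsetP => w; rewrite !inE => /orP[/orP[]|] /eqP->; by [].
  case: (boolP ((rep M3 != rep M1) && (rep M3 != rep M2))) => [/andP[h1 h2]|h3].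
    by apply: (c3s (rep M1) (rep M2) (rep M3)); rewrite ?inX // eq_sym.
  case: (boolP ((rep M4 != rep M1) && (rep M4 != rep M2))) => [/andP[h1 h2]|h4].
    by apply: (c3s (rep M1) (rep M2) (rep M4)); rewrite ?inX // eq_sym.
  exfalso; move: h3 h4; rewrite !negb_and !negbK.
  case/orP => /eqP E3; case/orP => /eqP E4; move: r34 q34; rewrite E3 E4 ?eqxx //.
    by rewrite q12.
  by rewrite esy q12.
move=> M mM a b aM bM ab; apply/negPn/negP => XM.
have [t Ht] := ov_uniform OV mM aM bM ab XM.
have [MX _] := wmodP _ _ mM.
have Hc : forall C1 C2, C1 \in children e N -> C2 \in children e N -> C1 != C2 -> qadj e C1 C2 = t.
  move=> C1 C2 cC1 cC2 C12; rewrite qE //; apply: Ht; rewrite ?repne //.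
  - by apply/imsetP; exists C1.
  - by apply/imsetP; exists C2.
case: t Ht Hc => Ht Hc.
  move: q34; rewrite Hc //.
by move: q12; rewrite Hc.
Qed.

End Mods.

Lemma prime_embed (T1 T2 : finType) (r : rel T1) (e : rel T2) (f : T1 -> T2) (X : {set T1}) :
  injective f -> (forall x y, r x y = e (f x) (f y)) ->
  primeb r X -> primeb e (f @: X).
Proof.
move=> finj fE /primeP[cX HX]; apply/primeP; split; first by rewrite card_imset.
move=> M2 /wmodP[M2X H2] a2 b2 a2M b2M ab2.
set M1 := [set x in X | f x \in M2].
have m1 : wmod r X M1.
  apply/wmodP; split; first by apply/subsetP => x; rewrite inE => /andP[].
  move=> x y z xX; rewrite !inE xX /= => xM /andP[_ yM] /andP[_ zM].
  by rewrite !fE; apply: H2; rewrite ?mem_imset.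
have [a1 a1X Ea] := imsetP (subsetP M2X a2 a2M).
have [b1 b1X Eb] := imsetP (subsetP M2X b2 b2M).
have XM1 : X \subset M1.
  apply: (HX _ m1 a1 b1); rewrite ?inE ?a1X ?b1X -?Ea -?Eb //.
  by apply: contra ab2 => /eqP E; rewrite Ea Eb E.
apply/subsetP => p /imsetP[x xX ->].
by move: (subsetP XM1 x xX); rewrite inE => /andP[].
Qed.

Lemma prime_embed_inv (T1 T2 : finType) (r : rel T1) (e : rel T2) (f : T1 -> T2) (X : {set T1}) :
  injective f -> (forall x y, r x y = e (f x) (f y)) ->
  primeb e (f @: X) -> primeb r X.
Proof.
move=> finj fE /primeP[cX HX]; apply/primeP; split; first by rewrite card_imset in cX.
move=> M1 /wmodP[M1X H1] a b aM bM ab.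
have m2 : wmod e (f @: X) (f @: M1).
  apply/wmodP; split; first exact: imsetS.
  move=> p y2 z2 /imsetP[x xX ->]; rewrite mem_imset // => xM.
  move=> /imsetP[y yM ->] /imsetP[z zM ->]; rewrite -!fE; exact: H1.
have := HX _ m2 (f a) (f b); rewrite !mem_imset // => /(_ aM bM).
rewrite (inj_eq finj) => /(_ ab) sub.
apply/subsetP => x xX; have := subsetP sub (f x); rewrite !mem_imset //.
by apply.
Qed.

Lemma kmod_iff (T : finType) (e : rel T) k : symmetric e ->
  (k_modular e k <-> forall X, primeb e X -> #|X| <= k).
Proof.
move=> es; split.
  move=> Hk X pX; case: (leqP #|X| k) => // kX.
  by case: (prime_notk es pX kX Hk).
move=> H N pN; have [X [pX cX]] := node_prime es pN.
by rewrite -cX; apply: H.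
Qed.

Section Final.
Variable k : nat.
Definition KK := k + 4.
Definition GT := {n : 'I_KK.+1 & {ffun 'I_n * 'I_n -> bool}}.
Definition grel (p : GT) : rel 'I_(tag p) := fun x y => tagged p (x, y).
Arguments grel : clear implicits.
Definition mkg (p : GT) : sgraph := @FGraph (tag p) (grel p).
Definition goodp (p : GT) : bool :=
  [&& [forall x, forall y, grel p x y == grel p y x], [forall x, ~~ grel p x x],
      primeb (grel p) setT & k < tag p].
Definition Idx := {p : GT | goodp p}.
Definition FF (i : 'I_#|{: Idx}|) : sgraph := mkg (val (enum_val i)).

Lemma good_simple p : goodp p -> sgraph_simple (mkg p).
Proof.
case/and4P => /forallP Hs /forallP Hi _ _; split.
  by move=> x y; have := Hs x => /forallP/(_ y) /eqP.
by move=> x; apply/negbTE; apply: Hi.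
Qed.

End Final.

Theorem mainTheorem17 (k : nat) :
  exists (m : nat) (F : 'I_m -> sgraph),
    (forall i, sgraph_simple (F i)) /\
    forall (T : finType) (e : rel T), simple_graph e ->
      (k_modular e k <-> forall i, ~ contains_induced (F i) e).
Proof.
exists #|{: Idx k}|, (@FF k); split.
  by move=> i; apply: good_simple; apply: (valP (enum_val i)).
move=> T e [es ei]; rewrite kmod_iff //; split.
  move=> H i [f [finj fE]].
  have gp : goodp (val (enum_val i)) := valP (enum_val i).
  case/and4P: gp => _ _ pS kS.
  have := H _ (prime_embed finj fE pS).
  by rewrite card_imset // cardsT card_ord leqNgt kS.
move=> H X pX; case: (leqP #|X| k) => // kX; exfalso.
have [Z [ZX pZ kZ cZ]] := shrink es pX kX.
have hn : #|Z| < (KK k).+1 by rewrite /KK ltnS.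
pose n : 'I_(KK k).+1 := Ordinal hn.
pose g : 'I_n -> T := fun i => enum_val (A := Z) i.
pose ff : {ffun 'I_n * 'I_n -> bool} := [ffun q => e (g q.1) (g q.2)].
pose p : GT k := existT _ n ff.
have ginj : injective g by move=> x y /enum_val_inj.
have gim : g @: setT = Z.
  apply/setP => x; apply/imsetP/idP => [[i _ ->]|xZ]; first exact: enum_valP.
  by exists (enum_rank_in xZ x) => //; rewrite /g (enum_rankK_in xZ).
have gE : forall x y : 'I_n, @grel k p x y = e (g x) (g y) by move=> x y; rewrite /grel /= ffunE.
have gp : goodp p.
  apply/and4P; split.
  - by apply/forallP => x; apply/forallP => y; rewrite !gE es.
  - by apply/forallP => x; rewrite gE ei.
  - by apply: (prime_embed_inv ginj gE); rewrite gim.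
  - by [].
pose i := enum_rank (exist (fun q => goodp q) p gp : Idx k).
have E : FF i = mkg p by rewrite /FF /i enum_rankK.
apply: (H i); rewrite E; exists g; split => //.
Qed.
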